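(* Let $1\le q<p\le\infty$ with $q<2$, and let $A=(a_{ij})$ be a real $m\times n$ matrix. Then $$\|(A\circ A)^T\colon\ell^m_{q^*/2}\to\ell^n_{p^*/2}\|^{1/2}\ge c(p,q)\max_{j\le n}\sqrt{\ln(j+1)}\,b_j^{\downarrow},$$ where $b_j=\|(a_{ij})_{i\le m}\|_{2q/(2-q)}$ and $c(p,q)>0$ depends only on $p,q$.
   Context: $A\circ A=(a_{ij}^2)$, $p^*$ Hölder conjugate of $p$. $\ell_s^n$ is $\mathbb{R}^n$ with $\|x\|_s=(\sum|x_j|^s)^{1/s}$ ($\max$ for $s=\infty$; quasi-norm for $s<1$), $\|B\colon\ell_s^n\to\ell_t^m\|=\sup_{\|x\|_s\le1}\|Bx\|_t$. $(b_j^{\downarrow})$ is the non-increasing rearrangement of $(|b_j|)$. *)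

(* Defs.v *)
From HB Require Import structures.
From mathcomp Require Import all_boot all_order all_algebra.
From mathcomp Require Import all_classical all_reals all_analysis.
From mathcomp Require Import Rstruct Rstruct_topology.
From Stdlib Require Import Rdefinitions.
Set Implicit Arguments. Unset Strict Implicit. Unset Printing Implicit Defensive.
Import Order.TTheory GRing.Theory Num.Theory.
Local Open Scope ring_scope.

Definition hconj (p : \bar R) : \bar R :=
  match p with
  | EFin r => if r == 1 then +oo%E else (r / (r - 1))%:E
  | +oo%E => 1%:E
  | -oo%E => -oo%E
  end.

Definition half_exp (s : \bar R) : \bar R :=
  match s with
  | EFin r => (r / 2)%:E
  | e => e
  end.

Definition lnorm (s : \bar R) (n : nat) (x : 'I_n -> R) : R :=
  match s with
  | EFin r => powR (\sum_(j < n) powR `|x j| r) (r^-1)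
  | +oo%E => \big[Order.max/0]_(j < n) `|x j|
  | -oo%E => 0
  end.

Definition opnorm (s t : \bar R) (m n : nat) (B : 'M[R]_(m, n)) : R :=
  sup [set lnorm t (fun i : 'I_m => \sum_(j < n) B i j * x j) |
        x in [set x : 'I_n -> R | lnorm s x <= 1]].

Definition hsq (m n : nat) (A : 'M[R]_(m, n)) : 'M[R]_(m, n) :=
  \matrix_(i, j) (A i j ^+ 2).

(* non-increasing rearrangement of (|b_j|), 0-indexed: decr b k = b^down_{k+1} *)
Definition decr (n : nat) (b : 'I_n -> R) (k : nat) : R :=
  nth 0 (sort (fun x y : R => y <= x) [seq `|b j| | j <- enum 'I_n]) k.

(* Main.v *)
Require Import Defs.
From HB Require Import structures.
From mathcomp Require Import all_boot all_order all_algebra.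
From mathcomp Require Import all_classical all_reals all_analysis.
From mathcomp Require Import Rstruct Rstruct_topology.
From Stdlib Require Import Rdefinitions.
From mathcomp Require Import ring lra.
Import Order.TTheory GRing.Theory Num.Theory.
Local Open Scope ring_scope.

Lemma lnorm_mono (r : R) n (y z : 'I_n -> R) : 0 < r ->
  (forall j, `|y j| <= `|z j|) -> lnorm r%:E y <= lnorm r%:E z.
Proof.
move=> r0 yz /=; apply: ge0_ler_powR; first by rewrite invr_ge0 ltW.
- by rewrite nnegrE sumr_ge0 // => j _; exact: powR_ge0.
- by rewrite nnegrE sumr_ge0 // => j _; exact: powR_ge0.
apply: ler_sum => j _; apply: ge0_ler_powR; rewrite ?nnegrE ?normr_ge0 //; exact: ltW.
Qed.

Lemma lnorm_lb (r : R) n (y : 'I_n -> R) (S : {set 'I_n}) v : 0 < r -> 0 <= v ->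
  (forall j, j \in S -> v <= `|y j|) -> powR (#|S|%:R) r^-1 * v <= lnorm r%:E y.
Proof.
move=> r0 v0 H /=.
have e1 : powR (#|S|%:R * powR v r) r^-1 = powR #|S|%:R r^-1 * v.
  by rewrite powRM ?powR_ge0 // -powRrM mulfV ?gt_eqF // powRr1.
rewrite -e1; apply: ge0_ler_powR; first by rewrite invr_ge0 ltW.
- by rewrite nnegrE mulr_ge0 ?powR_ge0.
- by rewrite nnegrE sumr_ge0 // => j _; exact: powR_ge0.
rewrite (bigID (mem S)) /= -[X in X <= _]addr0; apply: lerD; last first.
  by rewrite sumr_ge0 // => j _; exact: powR_ge0.
rewrite -sum1_card natr_sum mulr_suml; apply: ler_sum => j jS.
rewrite mul1r; apply: ge0_ler_powR; rewrite ?nnegrE ?normr_ge0 //; [exact: ltW | exact: H].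
Qed.

Lemma ball_coord (s : \bar R) n (x : 'I_n -> R) :
  (s = +oo%E \/ exists r, s = r%:E /\ 0 < r) -> lnorm s x <= 1 -> forall i, `|x i| <= 1.
Proof.
case=> [->|[r [-> r0]]] /= H i.
  by apply: le_trans H; apply: le_bigmax.
have sge : 0 <= \sum_(j < n) powR `|x j| r by rewrite sumr_ge0 // => j _; exact: powR_ge0.
have S1 : \sum_(j < n) powR `|x j| r <= 1.
  have -> : \sum_(j < n) powR `|x j| r = powR (powR (\sum_(j < n) powR `|x j| r) r^-1) r.
    by rewrite -powRrM mulVf ?lt0r_neq0 // powRr1.
  apply: (@le_trans _ _ (powR 1 r)); last by rewrite powR1.
  apply: ge0_ler_powR; rewrite ?nnegrE ?powR_ge0 ?ler01 //; exact: ltW.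
have xi : powR `|x i| r <= 1.
  apply: le_trans S1; rewrite (bigD1 i) //= lerDl sumr_ge0 // => j _; exact: powR_ge0.
have -> : `|x i| = powR (powR `|x i| r) r^-1.
  by rewrite -powRrM mulfV ?lt0r_neq0 // powRr1.
apply: (@le_trans _ _ (powR 1 r^-1)); last by rewrite powR1.
apply: ge0_ler_powR; rewrite ?nnegrE ?powR_ge0 ?ler01 //; by rewrite invr_ge0 ltW.
Qed.
Lemma card_count (n : nat) (P : pred 'I_n) : #|[set j | P j]| = count P (enum 'I_n).
Proof. rewrite cardsE cardE enumT /enum_mem size_filter. apply: eq_count => x. by rewrite !inE. Qed.

Lemma decr_count (n : nat) (b : 'I_n -> R) (k : nat) : leq k.+1 n ->
  leq k.+1 #|[set j | decr b k <= `|b j|]|.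
Proof.
move=> kn; rewrite card_count.
set f := fun j : 'I_n => `|b j|.
set s := sort (fun x y : R => y <= x) [seq f j | j <- enum 'I_n].
have pe : perm_eq s [seq f j | j <- enum 'I_n] by exact/permEl/perm_sort.
have ss : size s = n by rewrite (perm_size pe) size_map size_enum_ord.
have so : sorted (fun x y : R => y <= x) s.
  by apply: sort_sorted => x y; exact: le_total.
have -> : decr b k = nth 0 s k by [].
set v := nth 0 s k.
have cP : count (fun y => v <= y) s = count (fun j => v <= `|b j|) (enum 'I_n).
  by rewrite (permP pe) count_map.
rewrite -cP -(cat_take_drop k.+1 s) count_cat.
have : all (fun y => v <= y) (take k.+1 s).
  apply/allP => y /(nthP 0) [i]; rewrite size_takel ?ss // => ilt <-.
  rewrite nth_take //.
  apply: (sorted_leq_nth (leT := fun x y : R => y <= x)) => //;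
    rewrite ?inE ?ss ?(leq_trans ilt) // -?ltnS //.
  by move=> x1 y1 z1 /= h1 h2; exact: le_trans h2 h1.
rewrite all_count => /eqP ->; rewrite size_takel ?ss //.
exact: leq_addr.
Qed.
Lemma has_ub_op (s : \bar R) (t : R) (m n : nat) (B : 'M[R]_(m,n)) : 0 < t ->
  (forall x : 'I_n -> R, lnorm s x <= 1 -> forall i, `|x i| <= 1) ->
  has_ubound [set lnorm t%:E (fun i : 'I_m => \sum_(j < n) B i j * x j) |
        x in [set x : 'I_n -> R | lnorm s x <= 1]].
Proof.
move=> t0 hb; exists (lnorm t%:E (fun i : 'I_m => \sum_(j < n) `|B i j|)).
move=> y [x xb <-]; apply: lnorm_mono => // i.
rewrite [X in _ <= X]ger0_norm ?sumr_ge0 //; apply: le_trans (ler_norm_sum _ _ _) _.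
apply: ler_sum => j _; rewrite normrM; apply: ler_piMr => //; exact: hb.
Qed.

Lemma powRV (x r : R) : 0 <= x -> powR (x^-1) r = powR x (- r).
Proof. by move=> x0; rewrite -powR_inv1 // -powRrM mulN1r. Qed.

Lemma sq_powR (a : R) : a ^+ 2 = powR `|a| 2.
Proof. by rewrite powR_mulrn ?normr_ge0 // real_normK ?num_real. Qed.
Lemma sE_cases (q : R) : 1 <= q -> q < 2 ->
  (half_exp (hconj q%:E) = +oo%E /\ 2 * (q - 1) / q = 0) \/
  (exists r, half_exp (hconj q%:E) = r%:E /\ 0 < r /\ r^-1 = 2 * (q - 1) / q).
Proof.
move=> q1 q2; rewrite /hconj /half_exp.
have [->|qn1] := eqVneq q 1; first by left; split => //; rewrite subrr mulr0 mul0r.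
right; exists (q / (q - 1) / 2); split => //.
have q1' : 1 < q by rewrite lt_neqAle eq_sym qn1 q1.
have qm : 0 < q - 1 by rewrite subr_gt0.
split; first by rewrite !divr_gt0 // (lt_trans ltr01 q1').
rewrite !invfM !invrK; field.
by rewrite (gt_eqF (lt_trans ltr01 q1')).
Qed.

Lemma core (q t : R) (m n : nat) (A : 'M[R]_(m, n)) (S : {set 'I_n}) (beta : R) :
  1 <= q -> q < 2 -> 0 < t -> 0 < beta -> leq 1 #|S| ->
  (forall j, j \in S -> beta <= lnorm ((2%:R * q / (2%:R - q))%:E) (fun i : 'I_m => A i j)) ->
  powR #|S|%:R (t^-1 - 2 * (q - 1) / q) * beta ^+ 2
    <= opnorm (half_exp (hconj q%:E)) t%:E (hsq A)^T.
Proof.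
move=> q1 q2 t0 b0 S1 hS.
pose e := 2%:R * q / (2%:R - q).
pose g := 2 * (q - 1) / q.
pose N : R := #|S|%:R.
pose b := fun j : 'I_n => lnorm e%:E (fun i : 'I_m => A i j).
have q0 : 0 < q by apply: lt_le_trans q1.
have e0 : 0 < e by rewrite /e divr_gt0 ?mulr_gt0 // subr_gt0.
have eg : e * g = e - 2.
  rewrite /e /g; field.
  by rewrite subr_eq0 (gt_eqF q2) (gt_eqF q0).
have g0 : 0 <= g by rewrite /g divr_ge0 ?mulr_ge0 ?subr_ge0 // ltW.
have N0 : 0 < N by rewrite /N ltr0n.
have bpos : forall j, j \in S -> 0 < b j by move=> j jS; apply: lt_le_trans (hS j jS).
have Wdef : forall j, powR (b j) e = \sum_(i < m) powR `|A i j| e.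
  move=> j; rewrite /b /= -powRrM mulVf ?gt_eqF // powRr1 //.
  by rewrite sumr_ge0 // => i _; exact: powR_ge0.
pose w := fun i j => powR `|A i j| e / powR (b j) e.
pose x := fun i : 'I_m => powR (N^-1 * \sum_(j in S) w i j) g.
have hball : forall y : 'I_m -> R, lnorm (half_exp (hconj q%:E)) y <= 1 -> forall i, `|y i| <= 1.
  move=> y; apply: ball_coord.
  case: (sE_cases q q1 q2) => [[-> _]|[r [-> [r0 _]]]]; [by left | by right; exists r].
have hub := has_ub_op _ t _ _ (hsq A)^T t0 hball.
have wge : forall i k, 0 <= w i k.
  by move=> i k; rewrite /w divr_ge0 ?powR_ge0.
have xball : lnorm (half_exp (hconj q%:E)) x <= 1.
  case: (sE_cases q q1 q2) => [[-> g0']|[r [-> [r0 rg]]]].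
    apply: bigmax_le => //= i _.
    by rewrite /x /g g0' powRr0 normr1.
  rewrite /=.
  have -> : \sum_(i < m) powR `|x i| r = 1.
    transitivity (\sum_(i < m) N^-1 * \sum_(k in S) w i k).
      apply: eq_bigr => i _; rewrite ger0_norm ?powR_ge0 // /x /g -rg -powRrM.
      rewrite mulVf ?lt0r_neq0 // powRr1 //.
      by rewrite mulr_ge0 ?invr_ge0 ?(ltW N0) // sumr_ge0 // => k _; exact: wge.
    rewrite -mulr_sumr exchange_big /=.
    rewrite (eq_bigr (fun _ => 1)); last first.
      move=> k kS; rewrite /w -mulr_suml -Wdef mulfV //.
      exact: lt0r_neq0 (powR_gt0 _ (bpos k kS)).
    by rewrite sumr_const mulVf // lt0r_neq0.
  by rewrite powR1.
apply: (@le_trans _ _ (lnorm t%:E (fun j : 'I_n => \sum_(i < m) (hsq A)^T j i * x i))); last first.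
  by rewrite /opnorm; apply: (ub_le_sup hub); exists x.
have rowlb : forall j, j \in S ->
    powR N (-g) * beta ^+ 2 <= `|\sum_(i < m) (hsq A)^T j i * x i|.
  move=> j jS.
  rewrite ger0_norm; last first.
    by apply: sumr_ge0 => i _; rewrite !mxE mulr_ge0 ?sqr_ge0 ?powR_ge0.
  pose W := powR (b j) e.
  have W0 : 0 < W by rewrite /W powR_gt0 // bpos.
  have h1 : \sum_(i < m) powR `|A i j| e * powR (N * W) (-g)
            <= \sum_(i < m) (hsq A)^T j i * x i.
    apply: ler_sum => i _; rewrite !mxE.
    have xi : powR (N^-1 * w i j) g <= x i.
      apply: ge0_ler_powR => //; rewrite ?nnegrE.
      - by rewrite mulr_ge0 ?invr_ge0 ?(ltW N0).
      - by rewrite mulr_ge0 ?invr_ge0 ?(ltW N0) ?sumr_ge0.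
      apply: ler_wpM2l; first by rewrite invr_ge0 ltW.
      by rewrite (bigD1 j) //= lerDl sumr_ge0.
    apply: le_trans (ler_wpM2l (sqr_ge0 _) xi).
    rewrite sq_powR /w -/W mulrCA -invfM.
    rewrite [in X in _ <= X]powRM ?invr_ge0 ?powR_ge0 ?mulr_ge0 ?(ltW N0) ?(ltW W0) //.
    rewrite [in X in _ <= X]powRV ?mulr_ge0 ?(ltW N0) ?(ltW W0) // -powRrM eg mulrA -powRD; last first.
      by rewrite subrKC (gt_eqF e0).
    by rewrite subrKC.
  apply: le_trans h1.
  rewrite -mulr_suml -Wdef -/W.
  have -> : W * powR (N * W) (-g) = powR N (-g) * powR (b j) 2.
    rewrite powRM ?(ltW N0) ?(ltW W0) // mulrCA; congr (_ * _).
    rewrite /W -powRrM -powRD; last by rewrite (lt0r_neq0 (bpos j jS)) implybT.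
    by rewrite mulrN eg opprB subrKC.
  rewrite powR_mulrn ?(ltW (bpos j jS)) //; apply: ler_wpM2l; first exact: powR_ge0.
  rewrite !expr2; apply: ler_pM; rewrite ?(ltW b0) //; exact: hS.
apply: le_trans (lnorm_lb t _ _ S (powR N (-g) * beta ^+ 2) t0 _ rowlb).
  rewrite mulrA -powRD //; by rewrite (lt0r_neq0 N0) implybT.
by rewrite mulr_ge0 ?powR_ge0 ?sqr_ge0.
Qed.

Lemma log_bound (a : R) (k : nat) : 0 < a -> a <= 2 ->
  (a / 4) ^+ 2 * ln (k.+2)%:R <= powR (k.+1)%:R a.
Proof.
move=> a0 a2.
set y : R := (k.+2)%:R.
set P := powR (k.+1)%:R a.
have y0 : 0 < y by rewrite /y ltr0n.
have P0 : 0 <= P by exact: powR_ge0.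
have ly : 0 <= ln y by rewrite ln_ge0 // /y ler1n.
have h1 : a * ln y < powR y a by rewrite -ln_powR; apply: ln_sublinear; exact: powR_gt0.
have h2 : powR y a <= 4 * P.
  apply: (@le_trans _ _ (powR (2 * (k.+1)%:R) a)).
    apply: ge0_ler_powR; rewrite ?nnegrE ?(ltW a0) ?(ltW y0) ?mulr_ge0 ?ler0n //.
    by rewrite /y -natrM ler_nat mul2n -addnn addSn !ltnS leq_addl.
  rewrite powRM ?ler0n // ler_wpM2r //.
  apply: (@le_trans _ _ (powR 2 2)); first by apply: ler_powR => //; rewrite ler1n.
  rewrite powR_mulrn ?ler0n // expr2; lra.
nra.
Qed.

Lemma t_exists (p : \bar R) (q : R) : 1 <= q -> q < 2 -> (q%:E < p)%E ->
  exists t, half_exp (hconj p) = t%:E /\ 0 < t /\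
    0 < t^-1 - 2 * (q - 1) / q /\ t^-1 - 2 * (q - 1) / q <= 2.
Proof.
move=> q1 q2; have q0 : 0 < q by apply: lt_le_trans q1.
case: p => [p'| |] //=.
  rewrite lte_fin => qp.
  have p1 : 1 < p' by apply: le_lt_trans qp.
  have p0 : 0 < p' by apply: lt_trans p1.
  have pm : 0 < p' - 1 by rewrite subr_gt0.
  rewrite /hconj (gt_eqF p1) /half_exp; exists (p' / (p' - 1) / 2); split => //.
  have -> : (p' / (p' - 1) / 2)^-1 - 2 * (q - 1) / q = 2 * (p' - q) / (p' * q).
    by field; rewrite !lt0r_neq0.
  split; first by rewrite !divr_gt0 ?mulr_gt0 // subr_gt0.
  split; first by rewrite !divr_gt0 ?mulr_gt0 // subr_gt0.
  rewrite ler_pdivrMr ?mulr_gt0 //; nra.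
move=> _; rewrite /hconj /half_exp; exists (1 / 2); split => //.
have -> : (1 / 2)^-1 - 2 * (q - 1) / q = 2 / q by field; rewrite lt0r_neq0.
split; first by rewrite divr_gt0.
split; first by rewrite divr_gt0.
by rewrite ler_pdivrMr //; nra.
Qed.

Theorem proposition5p4 (p q : \bar R) :
  (1%:E <= q)%E -> (q < p)%E -> (q < 2%:E)%E ->
  exists c : R, 0 < c /\
    forall (m n : nat) (A : 'M[R]_(m, n)),
      let b := fun j : 'I_n =>
        lnorm ((2%:R * fine q / (2%:R - fine q))%:E) (fun i : 'I_m => A i j) in
      Num.sqrt (opnorm (half_exp (hconj q)) (half_exp (hconj p)) (hsq A)^T)
      >= c * \big[Order.max/0]_(k < n) (Num.sqrt (ln (k.+2)%:R) * decr b k).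
Proof.
case: q => [q| |] //.
rewrite !lee_fin !lte_fin => q1 qp q2.
have [t [ht [t0 [a0 a2]]]] := t_exists p q q1 q2 qp.
set a := t^-1 - 2 * (q - 1) / q in a0 a2.
exists (a / 4); split; first by rewrite divr_gt0.
move=> m n A; cbv zeta; rewrite ht.
set b := (fun j : 'I_n => lnorm _ _).
change (fine q%:E) with q in b.
set O := opnorm _ _ _.
set L := Num.sqrt O.
have c0 : 0 < a / 4 by rewrite divr_gt0.
have L0 : 0 <= L by exact: sqrtr_ge0.
suff H : forall k : 'I_n, a / 4 * (Num.sqrt (ln (k.+2)%:R) * decr b k) <= L.
  have hm : \big[Order.max/0]_(k < n) (Num.sqrt (ln (k.+2)%:R) * decr b k) <= L / (a / 4).
    apply: bigmax_le; first by rewrite divr_ge0 // ltW.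
    by move=> k _; rewrite ler_pdivlMr // mulrC; exact: H.
  have := ler_wpM2l (ltW c0) hm; rewrite mulrCA mulfV ?mulr1 //; exact: lt0r_neq0.
move=> k.
set v := decr b k.
have [v0|v0] := leP v 0.
  apply: le_trans L0; rewrite pmulr_rle0 //.
  by rewrite mulr_ge0_le0 ?sqrtr_ge0.
pose S := [set j | v <= `|b j|].
have cS : leq k.+1 #|S| := decr_count n b k (ltn_ord k).
have hS : forall j, j \in S -> v <= lnorm ((2%:R * q / (2%:R - q))%:E) (fun i : 'I_m => A i j).
  move=> j; rewrite inE => h; apply: le_trans h _.
  by rewrite ger0_norm // /b /= powR_ge0.
have hc := core q t m n A S v q1 q2 t0 v0 (leq_trans (ltn0Sn k) cS) hS.
have hl := log_bound a k a0 a2.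
have hp : powR (k.+1)%:R a <= powR #|S|%:R a.
  by apply: ge0_ler_powR; rewrite ?nnegrE ?ler0n ?ler_nat // ltW.
have : (a / 4) ^+ 2 * ln (k.+2)%:R * v ^+ 2 <= O.
  exact: le_trans (ler_wpM2r (sqr_ge0 v) (le_trans hl hp)) hc.
move/ler_wsqrtr; rewrite -/L sqrtrM ?mulr_ge0 ?sqr_ge0 ?ln_ge0 ?ler1n //.
rewrite sqrtrM ?sqr_ge0 // !sqrtr_sqr !ger0_norm ?(ltW v0) ?(ltW c0) // -mulrA.
  by []. all: exact: (ltW a0).
Qed.
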